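(* Let $A$ be a $2\times2$ integer matrix with determinant $1$ and no eigenvalue of modulus $1$, $f_A\colon\mathbb{T}^2\to\mathbb{T}^2$ the induced Anosov diffeomorphism, and $g_A\colon\mathbb{S}^2\to\mathbb{S}^2$ the homeomorphism induced by $f_A$ on the quotient $\mathbb{S}^2=\mathbb{T}^2/(x\sim -x)$. Then $g_A$ has the two-sided limit shadowing property.
   Context: A homeomorphism $f$ of a compact metric space has the two-sided limit shadowing property if for every sequence $(x_k)_{k\in\mathbb{Z}}$ with $d(f(x_k),x_{k+1})\to0$ as $|k|\to\infty$ there is $y$ with $d(f^k(y),x_k)\to0$ as $|k|\to\infty$. *)

(* Defs.v *)
From Stdlib Require Import Reals ZArith.
Open Scope R_scope.

Definition iterZ {X : Type} (f finv : X -> X) (k : Z) (x : X) : X :=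
  match k with
  | Z0 => x
  | Zpos p => Nat.iter (Pos.to_nat p) f x
  | Zneg p => Nat.iter (Pos.to_nat p) finv x
  end.

Definition tends_to_zero_two_sided (u : Z -> R) : Prop :=
  forall eps : R, eps > 0 ->
    exists N : Z, forall k : Z, (Z.abs k >= N)%Z -> Rabs (u k) < eps.

Definition two_sided_limit_shadowing {X : Type} (d : X -> X -> R)
    (f finv : X -> X) : Prop :=
  forall x : Z -> X,
    tends_to_zero_two_sided (fun k => d (f (x k)) (x (k + 1)%Z)) ->
    exists y : X,
      tends_to_zero_two_sided (fun k => d (iterZ f finv k y) (x k)).

(** * The torus T^2 = R^2/Z^2 and the sphere S^2 = T^2/(x ~ -x),
    points represented by their lifts in R^2. *)

Definition pt := (R * R)%type.

Definition circ_norm (t : R) : R := Rmin (frac_part t) (1 - frac_part t).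

Definition dT (x y : pt) : R :=
  Rmax (circ_norm (fst x - fst y)) (circ_norm (snd x - snd y)).

Definition neg_pt (y : pt) : pt := (- fst y, - snd y).

Definition dS (x y : pt) : R := Rmin (dT x y) (dT x (neg_pt y)).

(** The integer matrix A = [[a, b], [c, d]] acting linearly on lifts;
    this descends to f_A on T^2 and to g_A on S^2. *)
Definition lin (a b c d : Z) (x : pt) : pt :=
  (IZR a * fst x + IZR b * snd x, IZR c * fst x + IZR d * snd x).

(* A has an eigenvalue lambda = u + i v with |lambda| = 1, i.e.
   det (A - lambda I) = (a - lambda)(d - lambda) - b c = 0 written out in
   real and imaginary parts. *)
Definition has_unimodular_eigenvalue (a b c d : Z) : Prop :=
  exists u v : R, u ^ 2 + v ^ 2 = 1 /\
    (IZR a - u) * (IZR d - u) - v ^ 2 - IZR b * IZR c = 0 /\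
    v * ((IZR a - u) + (IZR d - u)) = 0.

(* g_A on S^2 (via lifts) and its inverse g_{A^{-1}}, A^{-1} = [[d,-b],[-c,a]]
   since det A = 1. *)
Definition gA (a b c d : Z) : pt -> pt := lin a b c d.
Definition gA_inv (a b c d : Z) : pt -> pt := lin d (- b) (- c) a.

(* Main.v *)
Require Import Defs.
From Stdlib Require Import Reals ZArith Lra Lia.
Open Scope R_scope.

Definition nint (t : R) : Z :=
  if Rle_dec (frac_part t) (1 - frac_part t) then Int_part t else (Int_part t + 1)%Z.

Lemma frac_bounds t : 0 <= frac_part t < 1.
Proof. unfold frac_part. destruct (base_Int_part t). lra. Qed.

Lemma circ_nint t : circ_norm t = Rabs (t - IZR (nint t)).
Proof.
  unfold circ_norm, nint, Rmin. pose proof (frac_bounds t) as F.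
  unfold frac_part in *. destruct (Rle_dec _ _).
  - rewrite Rabs_right; lra.
  - rewrite plus_IZR. rewrite Rabs_left1; lra.
Qed.

Lemma circ_min t (m : Z) : circ_norm t <= Rabs (t - IZR m).
Proof.
  unfold circ_norm. pose proof (frac_bounds t) as F. unfold frac_part in *.
  destruct (Z_le_gt_dec m (Int_part t)) as [H|H].
  - apply IZR_le in H. eapply Rle_trans. apply Rmin_l. rewrite Rabs_right; lra.
  - assert (H' : (Int_part t + 1 <= m)%Z) by lia. apply IZR_le in H'. rewrite plus_IZR in H'.
    eapply Rle_trans. apply Rmin_r. rewrite Rabs_left1; lra.
Qed.

Lemma circ_ge0 t : 0 <= circ_norm t.
Proof. rewrite circ_nint. apply Rabs_pos. Qed.

Lemma circ_le_abs t : circ_norm t <= Rabs t.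
Proof. pose proof (circ_min t 0). rewrite Rminus_0_r in H. exact H. Qed.

Lemma circ_shift t (n : Z) : circ_norm (t + IZR n) = circ_norm t.
Proof.
  apply Rle_antisym.
  - rewrite (circ_nint t). replace (t - IZR (nint t)) with (t + IZR n - IZR (nint t + n)).
    apply circ_min. rewrite plus_IZR; ring.
  - rewrite (circ_nint (t + IZR n)). replace (t + IZR n - IZR (nint (t + IZR n)))
      with (t - IZR (nint (t + IZR n) - n)). apply circ_min. rewrite minus_IZR; ring.
Qed.

Lemma circ_opp t : circ_norm (- t) = circ_norm t.
Proof.
  assert (forall s, circ_norm (- s) <= circ_norm s).
  { intro s. rewrite (circ_nint s). replace (Rabs (s - IZR (nint s))) with
      (Rabs (- s - IZR (- nint s))). apply circ_min.
    rewrite opp_IZR. rewrite <- Rabs_Ropp. f_equal; ring. }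
  apply Rle_antisym; auto. pose proof (H (- t)). rewrite Ropp_involutive in H0. auto.
Qed.

Lemma circ_eq t s (n : Z) : t = s + IZR n -> circ_norm t = circ_norm s.
Proof. intros ->. apply circ_shift. Qed.

Definition equiv (p q : pt) : Prop :=
  exists e : R, exists n1 n2 : Z, (e = 1 \/ e = -1) /\
    fst p = e * fst q + IZR n1 /\ snd p = e * snd q + IZR n2.

Lemma dT_sym u v : dT u v = dT v u.
Proof.
  unfold dT. rewrite <- (circ_opp (fst u - fst v)), <- (circ_opp (snd u - snd v)).
  f_equal; f_equal; ring.
Qed.

Lemma dS_sym u v : dS u v = dS v u.
Proof.
  unfold dS. rewrite dT_sym. f_equal. unfold dT, neg_pt; simpl. f_equal; f_equal; ring.
Qed.

Lemma dS_equiv_r u p q : equiv p q -> dS u p = dS u q.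
Proof.
  intros (e & n1 & n2 & [-> | ->] & H1 & H2); unfold dS, dT, neg_pt; simpl; rewrite H1, H2.
  - rewrite (circ_eq (fst u - (1 * fst q + IZR n1)) (fst u - fst q) (- n1)).
    2: rewrite opp_IZR; ring.
    rewrite (circ_eq (snd u - (1 * snd q + IZR n2)) (snd u - snd q) (- n2)).
    2: rewrite opp_IZR; ring.
    rewrite (circ_eq (fst u - - (1 * fst q + IZR n1)) (fst u - - fst q) n1) by ring.
    rewrite (circ_eq (snd u - - (1 * snd q + IZR n2)) (snd u - - snd q) n2) by ring.
    reflexivity.
  - rewrite (circ_eq (fst u - (-1 * fst q + IZR n1)) (fst u - - fst q) (- n1)).
    2: rewrite opp_IZR; ring.
    rewrite (circ_eq (snd u - (-1 * snd q + IZR n2)) (snd u - - snd q) (- n2)).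
    2: rewrite opp_IZR; ring.
    rewrite (circ_eq (fst u - - (-1 * fst q + IZR n1)) (fst u - fst q) n1) by ring.
    rewrite (circ_eq (snd u - - (-1 * snd q + IZR n2)) (snd u - snd q) n2) by ring.
    apply Rmin_comm.
Qed.

Lemma dS_equiv_l u p q : equiv p q -> dS p u = dS q u.
Proof. intros H. rewrite dS_sym, (dS_sym q). apply dS_equiv_r; auto. Qed.

Lemma equiv_refl p : equiv p p.
Proof. exists 1, 0%Z, 0%Z. split; [left; auto|]. simpl; split; ring. Qed.

Lemma equiv_trans p q r : equiv p q -> equiv q r -> equiv p r.
Proof.
  intros (e & n1 & n2 & He & H1 & H2) (e' & m1 & m2 & He' & H3 & H4).
  exists (e * e'). destruct He as [-> | ->].
  - exists (m1 + n1)%Z, (m2 + n2)%Z. split. destruct He'; subst; [left|right]; ring.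
    rewrite H1, H2, H3, H4, !plus_IZR. split; ring.
  - exists (- m1 + n1)%Z, (- m2 + n2)%Z. split. destruct He'; subst; [right|left]; ring.
    rewrite H1, H2, H3, H4, !plus_IZR, !opp_IZR. split; ring.
Qed.

Lemma equiv_lin a b c d p q : equiv p q -> equiv (lin a b c d p) (lin a b c d q).
Proof.
  intros (e & n1 & n2 & He & H1 & H2). exists e, (a * n1 + b * n2)%Z, (c * n1 + d * n2)%Z.
  split; auto. unfold lin; simpl. rewrite H1, H2, !plus_IZR, !mult_IZR. split; ring.
Qed.

Definition rep (p q : pt) : pt :=
  if Rle_dec (dT p q) (dT p (neg_pt q)) then
    (fst q + IZR (nint (fst p - fst q)), snd q + IZR (nint (snd p - snd q)))
  else
    (- fst q + IZR (nint (fst p + fst q)), - snd q + IZR (nint (snd p + snd q))).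

Lemma rep_equiv p q : equiv (rep p q) q.
Proof.
  unfold rep. destruct (Rle_dec _ _).
  - exists 1, (nint (fst p - fst q)), (nint (snd p - snd q)). simpl. split; [left; auto|]. split; ring.
  - exists (-1), (nint (fst p + fst q)), (nint (snd p + snd q)). simpl. split; [right; auto|]. split; ring.
Qed.

Lemma rep_close p q : Rabs (fst p - fst (rep p q)) <= dS p q /\ Rabs (snd p - snd (rep p q)) <= dS p q.
Proof.
  unfold rep, dS, dT, neg_pt, Rmin; simpl. destruct (Rle_dec _ _) as [H|H]; simpl.
  - rewrite (circ_nint (fst p - fst q)), (circ_nint (snd p - snd q)).
    replace (fst p - (fst q + IZR (nint (fst p - fst q)))) with (fst p - fst q - IZR (nint (fst p - fst q))) by ring.
    replace (snd p - (snd q + IZR (nint (snd p - snd q)))) with (snd p - snd q - IZR (nint (snd p - snd q))) by ring.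
    split; [apply Rmax_l | apply Rmax_r].
  - replace (fst p - - fst q) with (fst p + fst q) by ring.
    replace (snd p - - snd q) with (snd p + snd q) by ring.
    rewrite (circ_nint (fst p + fst q)), (circ_nint (snd p + snd q)).
    replace (fst p - (- fst q + IZR (nint (fst p + fst q)))) with (fst p + fst q - IZR (nint (fst p + fst q))) by ring.
    replace (snd p - (- snd q + IZR (nint (snd p + snd q)))) with (snd p + snd q - IZR (nint (snd p + snd q))) by ring.
    split; [apply Rmax_l | apply Rmax_r].
Qed.

Lemma dS_le p q : dS p q <= Rmax (Rabs (fst p - fst q)) (Rabs (snd p - snd q)).
Proof.
  unfold dS, dT. eapply Rle_trans. apply Rmin_l.
  eapply Rle_trans. apply Rle_max_compat_r, circ_le_abs. apply Rle_max_compat_l, circ_le_abs.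
Qed.

Lemma dS_ge0 p q : 0 <= dS p q.
Proof.
  unfold dS, dT, Rmin. destruct (Rle_dec _ _); (eapply Rle_trans; [apply circ_ge0 | apply Rmax_l]).
Qed.

Notation tz := tends_to_zero_two_sided.

Lemma tz_halves (u : Z -> R) :
  (forall eps, eps > 0 -> exists N : Z, forall k, (k >= N)%Z -> Rabs (u k) < eps) ->
  (forall eps, eps > 0 -> exists N : Z, forall k, (k <= - N)%Z -> Rabs (u k) < eps) ->
  tz u.
Proof.
  intros H1 H2 eps He. destruct (H1 eps He) as [N1 HN1]. destruct (H2 eps He) as [N2 HN2].
  exists (Z.max 0 (Z.max N1 N2)). intros k Hk.
  destruct (Z_le_gt_dec 0 k).
  - apply HN1. rewrite Z.abs_eq in Hk by lia. lia.
  - apply HN2. rewrite Z.abs_neq in Hk by lia. lia.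
Qed.

Lemma tz_pos (u : Z -> R) : tz u ->
  forall eps, eps > 0 -> exists N : Z, forall k, (k >= N)%Z -> Rabs (u k) < eps.
Proof.
  intros H eps He. destruct (H eps He) as [N HN]. exists (Z.max N 0). intros k Hk.
  apply HN. rewrite Z.abs_eq by lia. lia.
Qed.

Lemma tz_neg (u : Z -> R) : tz u ->
  forall eps, eps > 0 -> exists N : Z, forall k, (k <= - N)%Z -> Rabs (u k) < eps.
Proof.
  intros H eps He. destruct (H eps He) as [N HN]. exists (Z.max N 0). intros k Hk.
  apply HN. rewrite Z.abs_neq by lia. lia.
Qed.

Lemma tz_le (u v : Z -> R) : tz v -> (forall k, Rabs (u k) <= Rabs (v k)) -> tz u.
Proof.
  intros H Hle eps He. destruct (H eps He) as [N HN]. exists N. intros k Hk.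
  eapply Rle_lt_trans. apply Hle. auto.
Qed.

Lemma tz_plus (u v : Z -> R) : tz u -> tz v -> tz (fun k => u k + v k).
Proof.
  intros Hu Hv eps He. destruct (Hu (eps/2)) as [N1 H1]. lra. destruct (Hv (eps/2)) as [N2 H2]. lra.
  exists (Z.max N1 N2). intros k Hk.
  eapply Rle_lt_trans. apply Rabs_triang. 
  assert (Rabs (u k) < eps/2) by (apply H1; lia).
  assert (Rabs (v k) < eps/2) by (apply H2; lia). lra.
Qed.

Lemma tz_scal (K : R) (u : Z -> R) : tz u -> tz (fun k => K * u k).
Proof.
  intros Hu eps He. destruct (Hu (eps / (Rabs K + 1))) as [N HN].
  { apply Rdiv_lt_0_compat. lra. pose proof (Rabs_pos K). lra. }
  exists N. intros k Hk. specialize (HN k Hk). rewrite Rabs_mult.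
  pose proof (Rabs_pos K). pose proof (Rabs_pos (u k)).
  apply Rle_lt_trans with ((Rabs K + 1) * Rabs (u k)). nra.
  apply Rmult_lt_compat_l with (r := Rabs K + 1) in HN. 2: lra.
  replace ((Rabs K + 1) * (eps / (Rabs K + 1))) with eps in HN by (field; lra). lra.
Qed.

Lemma tz_ext (u v : Z -> R) : tz u -> (forall k, v k = u k) -> tz v.
Proof. intros H E. apply (tz_le v u H). intros k. rewrite E. lra. Qed.

Lemma tz_shift (u : Z -> R) : tz u -> tz (fun k => u (- k - 1)%Z).
Proof.
  intros H eps He. destruct (H eps He) as [N HN]. exists (N + 1)%Z. intros k Hk.
  apply HN. lia.
Qed.

Lemma tz_rev (u : Z -> R) : tz u -> tz (fun k => u (- k)%Z).
Proof.
  intros H eps He. destruct (H eps He) as [N HN]. exists N. intros k Hk.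
  apply HN. lia.
Qed.

Lemma Z_cases (k : Z) : (exists n : nat, k = Z.of_nat n) \/ (exists m : nat, k = (- Z.of_nat (S m))%Z).
Proof.
  destruct (Z_le_gt_dec 0 k).
  - left. exists (Z.to_nat k). lia.
  - right. exists (Z.to_nat (- k - 1)). lia.
Qed.

Lemma ex_nat_bound (d : Z -> R) : tz d -> forall eta, eta > 0 ->
  exists M : nat, forall j : nat, (j >= M)%nat -> Rabs (d (Z.of_nat j)) <= eta.
Proof.
  intros H eta He. destruct (tz_pos d H eta He) as [N HN].
  exists (Z.to_nat (Z.max N 0)). intros j Hj. left. apply HN. lia.
Qed.

Lemma ex_nat_bound_neg (d : Z -> R) : tz d -> forall eta, eta > 0 ->
  exists M : nat, forall j : nat, (j >= M)%nat -> Rabs (d (- Z.of_nat j)%Z) <= eta.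
Proof.
  intros H eta He. destruct (tz_neg d H eta He) as [N HN].
  exists (Z.to_nat (Z.max N 0)). intros j Hj. left. apply HN. lia.
Qed.

Lemma geom_small (s : R) : 0 <= s < 1 -> forall e, e > 0 -> exists J : nat, forall j, (j >= J)%nat -> s ^ j < e.
Proof.
  intros Hs e He. destruct (pow_lt_1_zero s) with (y := e) as [J HJ]. rewrite Rabs_right; lra. lra.
  exists J. intros j Hj. specialize (HJ j Hj). rewrite Rabs_right in HJ. auto.
  apply Rle_ge, pow_le. lra.
Qed.

Lemma pow_le1 x n : 0 <= x <= 1 -> x ^ n <= 1.
Proof. intros H. induction n. simpl; lra. simpl. nra. Qed.

Section Scalar.
Variable rho : R.
Hypothesis Hrho : Rabs rho > 1.
Variables p d : Z -> R.
Hypothesis Hrec : forall k, p (k + 1)%Z = rho * p k - d k.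
Hypothesis Hd : tz d.

Let r := Rabs rho.
Let s := / r.
Let K := s / (1 - s).

Lemma rho_nz : rho <> 0.
Proof. intro E. rewrite E, Rabs_R0 in Hrho. lra. Qed.

Lemma s_bounds : 0 < s < 1.
Proof.
  unfold s, r. split. apply Rinv_0_lt_compat; lra.
  rewrite <- Rinv_1. apply Rinv_lt_contravar; lra.
Qed.

Lemma sr : s * r = 1.
Proof. unfold s. field. unfold r. lra. Qed.

Lemma K_pos : K > 0.
Proof. unfold K. pose proof s_bounds. apply Rdiv_lt_0_compat; lra. Qed.

Let a (n : nat) : R := p (Z.of_nat n) * (/ rho) ^ n.

Lemma abs_inv_pow n : Rabs ((/ rho) ^ n) = s ^ n.
Proof. rewrite <- RPow_abs, Rabs_inv. reflexivity. Qed.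

Lemma a_step n : a (S n) - a n = - d (Z.of_nat n) * (/ rho) ^ (S n).
Proof.
  unfold a. rewrite Nat2Z.inj_succ, <- Z.add_1_r, Hrec. simpl.
  set (t := (/ rho) ^ n). pose proof rho_nz. field. auto.
Qed.

Lemma a_cauchy_bound eta M : (forall j, (j >= M)%nat -> Rabs (d (Z.of_nat j)) <= eta) ->
  forall m i, (m >= M)%nat -> Rabs (a (m + i) - a m) <= eta * K * s ^ m * (1 - s ^ i).
Proof.
  intros Hb m i Hm. pose proof s_bounds as Sb. induction i.
  - rewrite Nat.add_0_r. unfold Rminus. rewrite Rplus_opp_r, Rabs_R0. simpl. lra.
  - replace (a (m + S i) - a m) with ((a (S (m + i)) - a (m + i)) + (a (m + i) - a m))
      by (rewrite Nat.add_succ_r; ring).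
    eapply Rle_trans. apply Rabs_triang. rewrite a_step.
    rewrite Rabs_mult, Rabs_Ropp, abs_inv_pow.
    assert (Rabs (d (Z.of_nat (m + i))) <= eta) by (apply Hb; lia).
    assert (0 <= s ^ S (m + i)) by (apply pow_le; lra).
    apply Rle_trans with (eta * s ^ S (m + i) + eta * K * s ^ m * (1 - s ^ i)).
    { apply Rplus_le_compat. apply Rmult_le_compat_r; auto. auto. }
    right. unfold K. simpl. rewrite pow_add. field. lra.
Qed.

Lemma a_cauchy : Cauchy_crit a.
Proof.
  intros eps He. pose proof K_pos. pose proof s_bounds.
  destruct (ex_nat_bound d Hd (eps / (2 * K + 1))) as [M HM].
  { apply Rdiv_lt_0_compat; lra. }
  exists M. intros n m Hn Hm. unfold Rdist.
  assert (forall n, (n >= M)%nat -> Rabs (a n - a M) <= eps / (2 * K + 1) * K).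
  { intros n' Hn'. replace n' with (M + (n' - M))%nat by lia.
    eapply Rle_trans. apply (a_cauchy_bound (eps / (2 * K + 1)) M HM); lia.
    assert (0 < s ^ M <= 1). { split. apply pow_lt; lra. apply pow_le1; lra. }
    assert (0 < s ^ (n' - M)) by (apply pow_lt; lra).
    assert (0 < eps / (2 * K + 1)) by (apply Rdiv_lt_0_compat; lra).
    set (X := eps / (2 * K + 1) * K).
    assert (0 <= X) by (unfold X; nra).
    assert (0 <= X * s ^ M) by nra.
    assert (X * s ^ M * s ^ (n' - M) >= 0) by nra. nra. }
  replace (a n - a m) with ((a n - a M) - (a m - a M)) by ring.
  eapply Rle_lt_trans. apply Rabs_triang. rewrite Rabs_Ropp.
  pose proof (H1 n Hn). pose proof (H1 m Hm).
  apply Rle_lt_trans with (2 * (eps / (2 * K + 1) * K)). lra.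
  replace (2 * (eps / (2 * K + 1) * K)) with (eps * (2 * K / (2 * K + 1))) by (field; lra).
  rewrite <- (Rmult_1_r eps) at 2. apply Rmult_lt_compat_l. lra.
  apply (Rmult_lt_reg_r (2 * K + 1)). lra. unfold Rdiv. rewrite Rmult_assoc, Rinv_l; lra.
Qed.

Lemma scalar_exp_C : exists C, forall eta M, (forall j, (j >= M)%nat -> Rabs (d (Z.of_nat j)) <= eta) ->
  forall m, (m >= M)%nat -> Rabs (C - a m) <= eta * K * s ^ m.
Proof.
  destruct (R_complete a a_cauchy) as [C HC]. exists C.
  intros eta M Hb m Hm. apply le_epsilon. intros e He.
  destruct (HC e He) as [N HN].
  pose proof s_bounds.
  set (n := Nat.max N m).
  specialize (HN n ltac:(lia)). unfold Rdist in HN.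
  replace (C - a m) with ((a n - a m) - (a n - C)) by ring.
  eapply Rle_trans. apply Rabs_triang. rewrite Rabs_Ropp.
  replace n with (m + (n - m))%nat by lia.
  pose proof (a_cauchy_bound eta M Hb m (n - m) Hm).
  assert (0 <= eta). { eapply Rle_trans. apply Rabs_pos. apply (Hb M). lia. }
  assert (0 < s ^ (n - m)) by (apply pow_lt; lra).
  assert (0 <= eta * K * s ^ m). { pose proof K_pos. pose proof (pow_lt s m ltac:(lra)). 
    apply Rmult_le_pos. nra. lra. }
  replace (m + (n - m))%nat with n in * by lia. nra.
Qed.

Lemma q_pos (q : Z -> R) C : q 0%Z = C -> (forall k, q (k + 1)%Z = rho * q k) ->
  forall n : nat, q (Z.of_nat n) = rho ^ n * C.
Proof.
  intros H0 Hq n. induction n. simpl. rewrite H0. ring.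
  rewrite Nat2Z.inj_succ, <- Z.add_1_r, Hq, IHn. simpl. ring.
Qed.

Lemma q_neg (q : Z -> R) C : q 0%Z = C -> (forall k, q (k + 1)%Z = rho * q k) ->
  forall n : nat, q (- Z.of_nat n)%Z * rho ^ n = C.
Proof.
  intros H0 Hq n. induction n. simpl. rewrite H0. ring.
  rewrite <- IHn. assert (Hq' := Hq (- Z.of_nat (S n))%Z).
  replace (- Z.of_nat (S n) + 1)%Z with (- Z.of_nat n)%Z in Hq' by lia. rewrite Hq'. simpl. ring.
Qed.

Lemma p_neg_bound eps N : eps > 0 -> (forall j, (j >= N)%nat -> Rabs (d (- Z.of_nat j)%Z) <= eps * (r - 1)) ->
  forall j, Rabs (p (- Z.of_nat (N + j))%Z) <= Rabs (p (- Z.of_nat N)%Z) * s ^ j + eps.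
Proof.
  intros He Hb j. pose proof s_bounds. pose proof sr. pose proof rho_nz. induction j.
  - rewrite Nat.add_0_r. simpl. lra.
  - set (k := (- Z.of_nat (N + S j))%Z).
    assert (Hk := Hrec k). replace (k + 1)%Z with (- Z.of_nat (N + j))%Z in Hk by (unfold k; lia).
    assert (E : p k = / rho * (p (- Z.of_nat (N + j))%Z + d k)).
    { rewrite Hk. field. auto. }
    rewrite E, Rabs_mult, Rabs_inv. fold r. fold s.
    assert (Rabs (d k) <= eps * (r - 1)) by (unfold k; apply Hb; lia).
    eapply Rle_trans. apply Rmult_le_compat_l. lra. apply Rabs_triang.
    apply Rle_trans with (s * (Rabs (p (- Z.of_nat N)%Z) * s ^ j + eps + eps * (r - 1))).
    apply Rmult_le_compat_l; lra.
    right. simpl. replace (s * (Rabs (p (- Z.of_nat N)%Z) * s ^ j + eps + eps * (r - 1)))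
      with (Rabs (p (- Z.of_nat N)%Z) * (s * s ^ j) + eps * (s * r)) by ring.
    rewrite H0. ring.
Qed.

Lemma p_to_zero_neg : forall eps, eps > 0 -> exists N : Z, forall k, (k <= - N)%Z -> Rabs (p k) < eps.
Proof.
  intros eps He. pose proof s_bounds. pose proof sr.
  assert (r > 1) by (unfold r; lra).
  destruct (ex_nat_bound_neg d Hd (eps / 2 * (r - 1))) as [N HN].
  { apply Rmult_lt_0_compat; lra. }
  set (P := Rabs (p (- Z.of_nat N)%Z)).
  assert (0 <= P) by apply Rabs_pos.
  destruct (geom_small s ltac:(lra) (eps / 4 / (P + 1))) as [J HJ].
  { apply Rdiv_lt_0_compat; lra. }
  exists (Z.of_nat (N + J)). intros k Hk.
  replace k with (- Z.of_nat (N + Z.to_nat (- k - Z.of_nat N)))%Z by lia.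
  eapply Rle_lt_trans. apply (p_neg_bound (eps / 2)); auto. lra.
  specialize (HJ (Z.to_nat (- k - Z.of_nat N)) ltac:(lia)).
  assert (0 <= s ^ (Z.to_nat (- k - Z.of_nat N))) by (apply pow_le; lra).
  fold P.
  assert (HH : P * s ^ Z.to_nat (- k - Z.of_nat N) <= (P + 1) * (eps / 4 / (P + 1))) by nra.
  replace ((P + 1) * (eps / 4 / (P + 1))) with (eps / 4) in HH by (field; lra). lra.
Qed.

End Scalar.

Lemma scalar_exp (rho : R) (p d : Z -> R) : Rabs rho > 1 ->
  (forall k, p (k + 1)%Z = rho * p k - d k) -> tz d ->
  exists C, forall q : Z -> R, q 0%Z = C -> (forall k, q (k + 1)%Z = rho * q k) ->
  tz (fun k => q k - p k).
Proof.
  intros Hr Hrec Hd. destruct (scalar_exp_C rho Hr p d Hrec Hd) as [C HC]. exists C.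
  intros q Hq0 Hq. pose proof (s_bounds rho Hr) as Sb. pose proof (sr rho Hr) as SR.
  pose proof (K_pos rho Hr) as KP. pose proof (rho_nz rho Hr) as NZ.
  set (r := Rabs rho) in *. set (s := / r) in *. set (K := s / (1 - s)) in *.
  apply tz_halves.
  - intros eps He.
    destruct (ex_nat_bound d Hd (eps / (K + 1))) as [M HM]. { apply Rdiv_lt_0_compat; lra. }
    exists (Z.of_nat M). intros k Hk. replace k with (Z.of_nat (Z.to_nat k)) by lia.
    set (n := Z.to_nat k).
    specialize (HC _ _ HM n ltac:(lia)).
    rewrite (q_pos rho q C Hq0 Hq n).
    replace (p (Z.of_nat n)) with (rho ^ n * (p (Z.of_nat n) * (/ rho) ^ n)).
    2:{ rewrite pow_inv. field. apply pow_nonzero. auto. }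
    rewrite <- Rmult_minus_distr_l, Rabs_mult, <- RPow_abs. fold r.
    assert (0 < r ^ n) by (apply pow_lt; lra).
    eapply Rle_lt_trans. apply Rmult_le_compat_l. lra. apply HC.
    replace (r ^ n * (eps / (K + 1) * K * s ^ n)) with (eps / (K + 1) * K * (s * r) ^ n)
      by (rewrite Rpow_mult_distr; ring).
    rewrite SR, pow1.
    apply (Rmult_lt_reg_r (K + 1)). lra. unfold Rdiv. 
    replace (eps * / (K + 1) * K * 1 * (K + 1)) with (eps * K) by (field; lra). nra.
  - intros eps He.
    destruct (p_to_zero_neg rho Hr p d Hrec Hd (eps / 2)) as [N1 HN1]. lra.
    destruct (geom_small s ltac:(lra) (eps / 2 / (Rabs C + 1))) as [J HJ].
    { apply Rdiv_lt_0_compat. lra. pose proof (Rabs_pos C). lra. }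
    exists (Z.max N1 (Z.of_nat J)). intros k Hk.
    unfold Rminus. eapply Rle_lt_trans. apply Rabs_triang. rewrite Rabs_Ropp.
    assert (Rabs (p k) < eps / 2) by (apply HN1; lia).
    replace k with (- Z.of_nat (Z.to_nat (- k)))%Z by lia.
    set (n := Z.to_nat (- k)).
    assert (Hqn := q_neg rho q C Hq0 Hq n).
    assert (E : q (- Z.of_nat n)%Z = C * (/ rho) ^ n).
    { rewrite <- Hqn, pow_inv. field. apply pow_nonzero; auto. }
    rewrite E, Rabs_mult, <- RPow_abs, Rabs_inv. fold r. fold s.
    specialize (HJ n ltac:(lia)).
    assert (0 <= s ^ n) by (apply pow_le; lra). pose proof (Rabs_pos C).
    assert (HH : Rabs C * s ^ n <= (Rabs C + 1) * (eps / 2 / (Rabs C + 1))) by nra.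
    replace ((Rabs C + 1) * (eps / 2 / (Rabs C + 1))) with (eps / 2) in HH by (field; lra).
    replace (- Z.of_nat n)%Z with k by lia. lra.
Qed.

Lemma scalar_shadow (rho : R) (p d : Z -> R) : rho <> 0 -> Rabs rho <> 1 ->
  (forall k, p (k + 1)%Z = rho * p k - d k) -> tz d ->
  exists C, forall q : Z -> R, q 0%Z = C -> (forall k, q (k + 1)%Z = rho * q k) ->
  tz (fun k => q k - p k).
Proof.
  intros NZ N1 Hrec Hd. destruct (Rlt_le_dec 1 (Rabs rho)) as [H|H].
  - apply scalar_exp with d; auto.
  - assert (Rabs rho < 1) by lra.
    assert (Hr' : Rabs (/ rho) > 1).
    { rewrite Rabs_inv. rewrite <- Rinv_1. apply Rinv_lt_contravar. 
      rewrite Rmult_1_r. apply Rabs_pos_lt; auto. auto. }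
    destruct (scalar_exp (/ rho) (fun k => p (- k)%Z) (fun k => - (/ rho) * d (- k - 1)%Z) Hr') as [C HC].
    + intros k. assert (E := Hrec (- k - 1)%Z). replace (- k - 1 + 1)%Z with (- k)%Z in E by lia.
      replace (- (k + 1))%Z with (- k - 1)%Z by lia. rewrite E. field. auto.
    + apply tz_scal. apply tz_shift. auto.
    + exists C. intros q Hq0 Hq.
      assert (T := HC (fun k => q (- k)%Z) Hq0).
      eapply tz_ext. apply tz_rev. apply T.
      * intros k. assert (E := Hq (- k - 1)%Z). replace (- k - 1 + 1)%Z with (- k)%Z in E by lia.
        replace (- (k + 1))%Z with (- k - 1)%Z by lia. rewrite E. field. auto.
      * intros k. simpl. rewrite Z.opp_involutive. reflexivity.
Qed.

Section Main.
Variables a b c d : Z.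
Hypothesis Hdet : (a * d - b * c = 1)%Z.

Let A := lin a b c d.
Let Ai := lin d (- b) (- c) a.

Lemma det_R : IZR a * IZR d - IZR b * IZR c = 1.
Proof. rewrite <- mult_IZR, <- mult_IZR, <- minus_IZR, Hdet. reflexivity. Qed.

Lemma A_Ai p : A (Ai p) = p.
Proof.
  destruct p as [x y]. unfold A, Ai, lin; simpl. rewrite !opp_IZR. pose proof det_R as D.
  f_equal.
  - transitivity ((IZR a * IZR d - IZR b * IZR c) * x). ring. rewrite D; ring.
  - transitivity ((IZR a * IZR d - IZR b * IZR c) * y). ring. rewrite D; ring.
Qed.

Lemma Ai_A p : Ai (A p) = p.
Proof.
  destruct p as [x y]. unfold A, Ai, lin; simpl. rewrite !opp_IZR. pose proof det_R as D.
  f_equal.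
  - transitivity ((IZR a * IZR d - IZR b * IZR c) * x). ring. rewrite D; ring.
  - transitivity ((IZR a * IZR d - IZR b * IZR c) * y). ring. rewrite D; ring.
Qed.

Lemma iterZ_pos n w : iterZ A Ai (Z.of_nat n) w = Nat.iter n A w.
Proof. destruct n. reflexivity. simpl. rewrite SuccNat2Pos.id_succ. reflexivity. Qed.

Lemma iterZ_neg n w : iterZ A Ai (- Z.of_nat n) w = Nat.iter n Ai w.
Proof. destruct n. reflexivity. simpl. rewrite SuccNat2Pos.id_succ. reflexivity. Qed.

Lemma iterZ_succ k w : iterZ A Ai (k + 1) w = A (iterZ A Ai k w).
Proof.
  destruct (Z_cases k) as [[n ->] | [m ->]].
  - replace (Z.of_nat n + 1)%Z with (Z.of_nat (S n)) by lia. rewrite !iterZ_pos. reflexivity.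
  - replace (- Z.of_nat (S m) + 1)%Z with (- Z.of_nat m)%Z by lia. rewrite !iterZ_neg.
    simpl. rewrite A_Ai. reflexivity.
Qed.

Variable x : Z -> pt.

Fixpoint fwd (n : nat) : pt :=
  match n with O => x 0%Z | S m => rep (A (fwd m)) (x (Z.of_nat (S m))) end.
Fixpoint bwd (n : nat) : pt :=
  match n with O => x 0%Z | S m => Ai (rep (bwd m) (A (x (- Z.of_nat (S m))%Z))) end.
Definition z (k : Z) : pt :=
  match k with Z0 => x 0%Z | Zpos p => fwd (Pos.to_nat p) | Zneg p => bwd (Pos.to_nat p) end.

Lemma z_pos n : z (Z.of_nat n) = fwd n.
Proof. destruct n. reflexivity. unfold z. simpl. rewrite SuccNat2Pos.id_succ. reflexivity. Qed.

Lemma z_neg n : z (- Z.of_nat n) = bwd n.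
Proof. destruct n. reflexivity. unfold z. simpl. rewrite SuccNat2Pos.id_succ. reflexivity. Qed.

Lemma z_equiv k : equiv (z k) (x k).
Proof.
  destruct (Z_cases k) as [[n ->] | [m ->]].
  - rewrite z_pos. destruct n. apply equiv_refl. apply rep_equiv.
  - rewrite z_neg. simpl. rewrite <- (Ai_A (x (- Z.of_nat (S m))%Z)) at 2.
    apply equiv_lin. apply rep_equiv.
Qed.

Let D k := dS (A (x k)) (x (k + 1)%Z).

Lemma z_close k : Rabs (fst (A (z k)) - fst (z (k + 1)%Z)) <= D k /\
                  Rabs (snd (A (z k)) - snd (z (k + 1)%Z)) <= D k.
Proof.
  unfold D. destruct (Z_cases k) as [[n ->] | [m ->]].
  - replace (Z.of_nat n + 1)%Z with (Z.of_nat (S n)) by lia. rewrite !z_pos. simpl.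
    rewrite <- (dS_equiv_l _ (A (fwd n))). 
    2:{ apply equiv_lin. rewrite <- z_pos. apply z_equiv. }
    exact (rep_close (A (fwd n)) _).
  - replace (- Z.of_nat (S m) + 1)%Z with (- Z.of_nat m)%Z by lia. rewrite !z_neg. cbn [bwd].
    rewrite A_Ai. rewrite <- (dS_equiv_r _ (bwd m)). 2:{ rewrite <- z_neg. apply z_equiv. }
    rewrite dS_sym. destruct (rep_close (bwd m) (A (x (- Z.of_nat (S m))%Z))) as [H1 H2].
    rewrite <- Rabs_Ropp in H1, H2. split.
    + replace (fst (rep (bwd m) (A (x (- Z.of_nat (S m))%Z))) - fst (bwd m)) with
        (- (fst (bwd m) - fst (rep (bwd m) (A (x (- Z.of_nat (S m))%Z))))) by ring. auto.
    + replace (snd (rep (bwd m) (A (x (- Z.of_nat (S m))%Z))) - snd (bwd m)) with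
        (- (snd (bwd m) - snd (rep (bwd m) (A (x (- Z.of_nat (S m))%Z))))) by ring. auto.
Qed.

Let t := IZR a + IZR d.
Let L (rho : R) (v : pt) : R := IZR c * fst v + (rho - IZR a) * snd v.

Lemma L_A rho v : rho ^ 2 - t * rho + 1 = 0 -> L rho (A v) = rho * L rho v.
Proof.
  intros Hq. unfold L, A, lin, t in *; simpl. pose proof det_R as Dt.
  apply Rminus_diag_uniq.
  replace (IZR c * (IZR a * fst v + IZR b * snd v) + (rho - IZR a) * (IZR c * fst v + IZR d * snd v) -
           rho * (IZR c * fst v + (rho - IZR a) * snd v))
    with (- snd v * (rho ^ 2 - (IZR a + IZR d) * rho + 1) + snd v * (1 - (IZR a * IZR d - IZR b * IZR c))) by ring.
  rewrite Hq, Dt. ring.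
Qed.

Hypothesis HD : tz D.

Lemma scalar_for rho : rho ^ 2 - t * rho + 1 = 0 -> rho <> 0 -> Rabs rho <> 1 ->
  exists C, forall q : Z -> R, q 0%Z = C -> (forall k, q (k + 1)%Z = rho * q k) ->
  tz (fun k => q k - L rho (z k)).
Proof.
  intros Hq NZ N1.
  apply scalar_shadow with (d := fun k => L rho (A (z k)) - L rho (z (k + 1)%Z)); auto.
  - intros k. rewrite L_A; auto. ring.
  - apply tz_le with (v := fun k => (Rabs (IZR c) + Rabs (rho - IZR a)) * D k).
    apply tz_scal. auto.
    intros k. destruct (z_close k) as [H1 H2]. unfold L.
    assert (0 <= D k) by apply dS_ge0.
    rewrite (Rabs_right ((Rabs (IZR c) + Rabs (rho - IZR a)) * D k)).
    2:{ apply Rle_ge, Rmult_le_pos; auto. pose proof (Rabs_pos (IZR c)). pose proof (Rabs_pos (rho - IZR a)). lra. }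
    replace (IZR c * fst (A (z k)) + (rho - IZR a) * snd (A (z k)) -
       (IZR c * fst (z (k + 1)%Z) + (rho - IZR a) * snd (z (k + 1)%Z))) with
      (IZR c * (fst (A (z k)) - fst (z (k + 1)%Z)) + (rho - IZR a) * (snd (A (z k)) - snd (z (k + 1)%Z))) by ring.
    eapply Rle_trans. apply Rabs_triang. rewrite !Rabs_mult.
    pose proof (Rabs_pos (IZR c)). pose proof (Rabs_pos (rho - IZR a)).
    assert (Rabs (IZR c) * Rabs (fst (A (z k)) - fst (z (k + 1)%Z)) <= Rabs (IZR c) * D k)
      by (apply Rmult_le_compat_l; auto).
    assert (Rabs (rho - IZR a) * Rabs (snd (A (z k)) - snd (z (k + 1)%Z)) <= Rabs (rho - IZR a) * D k)
      by (apply Rmult_le_compat_l; auto).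
    lra.
Qed.

Hypothesis Ht : t * t > 4.
Hypothesis Hc : IZR c <> 0.

Lemma shadow_main : exists y, tz (fun k => dS (iterZ A Ai k y) (x k)).
Proof.
  set (s := sqrt (t * t - 4)).
  assert (Hs : s * s = t * t - 4) by (apply sqrt_sqrt; lra).
  assert (Hs0 : 0 < s) by (apply sqrt_lt_R0; lra).
  set (lam := (t + s) / 2). set (mu := (t - s) / 2).
  assert (root : forall rho, rho = lam \/ rho = mu -> rho ^ 2 - t * rho + 1 = 0 /\ rho <> 0 /\ Rabs rho <> 1).
  { intros rho Hr. assert (E : rho ^ 2 - t * rho + 1 = 0).
    { destruct Hr as [-> | ->]; unfold lam, mu; simpl;
      replace (((t + s) / 2) * (((t + s) / 2) * 1) - t * ((t + s) / 2) + 1) with ((4 - t * t + s * s) / 4) by field;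
      try replace (((t - s) / 2) * (((t - s) / 2) * 1) - t * ((t - s) / 2) + 1) with ((4 - t * t + s * s) / 4) by field;
      rewrite Hs; field. }
    split; auto. split.
    - intro HZ. rewrite HZ in E. simpl in E. lra.
    - intro H1. unfold Rabs in H1. destruct (Rcase_abs rho).
      + assert (rho = -1) by lra. subst rho. simpl in E. assert (t = -2) by lra. nra.
      + subst rho. simpl in E. assert (t = 2) by lra. nra. }
  destruct (root lam (or_introl eq_refl)) as (Rl & NZl & N1l).
  destruct (root mu (or_intror eq_refl)) as (Rm & NZm & N1m).
  destruct (scalar_for lam Rl NZl N1l) as [Cl HCl].
  destruct (scalar_for mu Rm NZm N1m) as [Cm HCm].
  assert (Hlm : lam - mu <> 0) by (unfold lam, mu; lra).
  set (w2 := (Cl - Cm) / (lam - mu)).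
  set (w := ((Cl - (lam - IZR a) * w2) / IZR c, w2)).
  exists w.
  set (W := fun k => iterZ A Ai k w).
  assert (Hl := HCl (fun k => L lam (W k))).
  assert (Hm := HCm (fun k => L mu (W k))).
  cbv beta in Hl, Hm.
  assert (Tl : tz (fun k => L lam (W k) - L lam (z k))).
  { apply Hl. unfold W, L, w; simpl. field. auto.
    intros k. unfold W. rewrite iterZ_succ. apply L_A. auto. }
  assert (Tm : tz (fun k => L mu (W k) - L mu (z k))).
  { apply Hm. unfold W, L, w, w2; simpl. field. auto.
    intros k. unfold W. rewrite iterZ_succ. apply L_A. auto. }
  assert (T2 : tz (fun k => snd (W k) - snd (z k))).
  { eapply tz_ext. apply tz_plus. apply (tz_scal (/ (lam - mu))). apply Tl.
    apply (tz_scal (- / (lam - mu))). apply Tm.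
    intros k. unfold L. field. auto. }
  assert (T1 : tz (fun k => fst (W k) - fst (z k))).
  { eapply tz_ext. apply tz_plus. apply (tz_scal (/ IZR c)). apply Tl.
    apply (tz_scal (- (lam - IZR a) / IZR c)). apply T2.
    intros k. unfold L. field. auto. }
  apply tz_le with (v := fun k => Rabs (fst (W k) - fst (z k)) + Rabs (snd (W k) - snd (z k))).
  - apply tz_plus; [eapply tz_le; [apply T1 | intros k; rewrite Rabs_Rabsolu; lra]
                   | eapply tz_le; [apply T2 | intros k; rewrite Rabs_Rabsolu; lra]].
  - intros k. fold (W k). rewrite <- (dS_equiv_r (W k) (z k) (x k)) by apply z_equiv.
    rewrite Rabs_right by (apply Rle_ge, dS_ge0).
    pose proof (Rabs_pos (fst (W k) - fst (z k))). pose proof (Rabs_pos (snd (W k) - snd (z k))).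
    rewrite (Rabs_right (_ + _)) by lra.
    eapply Rle_trans. apply dS_le. apply Rmax_lub; lra.
Qed.

End Main.

Theorem mainTheorem16 (a b c d : Z) :
  (a * d - b * c = 1)%Z ->
  ~ has_unimodular_eigenvalue a b c d ->
  two_sided_limit_shadowing dS (gA a b c d) (gA_inv a b c d).
Proof.
  intros Hdet Hno x Hx.
  pose proof (det_R a b c d Hdet) as DR.
  assert (Ht : (IZR a + IZR d) * (IZR a + IZR d) > 4).
  { destruct (Rlt_le_dec 4 ((IZR a + IZR d) * (IZR a + IZR d))) as [H|H]; auto.
    exfalso. apply Hno. set (t := IZR a + IZR d) in *.
    exists (t / 2), (sqrt (1 - t * t / 4)).
    assert (Hv : sqrt (1 - t * t / 4) * sqrt (1 - t * t / 4) = 1 - t * t / 4)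
      by (apply sqrt_sqrt; lra).
    assert (Hv2 : sqrt (1 - t * t / 4) ^ 2 = 1 - t * t / 4) by (simpl; rewrite Rmult_1_r; exact Hv).
    rewrite Hv2. split. field.
    split.
    - transitivity ((IZR a * IZR d - IZR b * IZR c) - 1 + 0 * t). unfold t. field. rewrite DR. ring.
    - replace (IZR a - t / 2 + (IZR d - t / 2)) with 0 by (unfold t; field). ring. }
  assert (Hc : IZR c <> 0).
  { intro Hc0. apply eq_IZR in Hc0. subst c. rewrite Z.mul_0_r, Z.sub_0_r in Hdet.
    destruct (Z.eq_mul_1 a d Hdet) as [-> | ->].
    - assert (d = 1%Z) by lia. subst d. simpl in Ht. lra.
    - assert (d = (-1)%Z) by lia. subst d. simpl in Ht. lra. }
  destruct (shadow_main a b c d Hdet x Hx Ht Hc) as [y Hy].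
  exists y. exact Hy.
Qed.
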